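(* Let $k \geq 1$ be an integer. Every outerplanar graph of girth at least $2k$ admits a homomorphism to the cycle $C_{2k+1}$.
   Context: A graph homomorphism from $G$ to $H$ is a map $f : V(G) \to V(H)$ such that $f(u)f(v) \in E(H)$ whenever $uv \in E(G)$. The girth of a graph is the length of a shortest cycle (infinite if acyclic). $C_m$ is the cycle on $m$ vertices. *)

(* Defs.v *)
From mathcomp Require Import all_boot.
Set Implicit Arguments. Unset Strict Implicit. Unset Printing Implicit Defensive.

Definition simple_graph (T : finType) (e : rel T) : Prop :=
  symmetric e /\ irreflexive e.

(* Outerplanar: the vertices can be placed in convex position (on a circle,
   in the cyclic order given by the injective labelling pos) so that the
   straight-line chords representing the edges pairwise do not cross,
   i.e. there are no edges ab, cd with pos a < pos c < pos b < pos d. *)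
Definition outerplanar (T : finType) (e : rel T) : Prop :=
  exists pos : T -> nat, injective pos /\
    forall a b c d, e a b -> e c d ->
      ~ [/\ pos a < pos c, pos c < pos b & pos b < pos d].

Definition is_graph_cycle (T : finType) (e : rel T) (s : seq T) : Prop :=
  [/\ 3 <= size s, uniq s & cycle e s].

Definition girth_ge (T : finType) (e : rel T) (g : nat) : Prop :=
  forall s, is_graph_cycle e s -> g <= size s.

Definition cycle_adj (m : nat) : rel 'I_m :=
  fun i j => (j == (i.+1 %% m) :> nat) || (i == (j.+1 %% m) :> nat).

Definition graph_hom (T U : finType) (e : rel T) (f' : rel U) (f : T -> U) : Prop :=
  forall x y, e x y -> f' (f x) (f y).

(* Main.v *)
Require Import Defs.
From mathcomp Require Import all_boot.
From mathcomp Require Import zify.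
From Stdlib Require Import Classical.

Set Implicit Arguments. Unset Strict Implicit. Unset Printing Implicit Defensive.


Ltac clia := repeat match goal with H : is_true (_ \in _) |- _ => clear H end; lia.

Section Walk.
Variable k : nat.
Local Notation m := (2 * k + 1).
Lemma m_gt0 : 0 < m. Proof. by rewrite addn1. Qed.
Definition mk (p : nat) : 'I_m := Ordinal (ltn_pmod p m_gt0).
Local Notation adj := (@cycle_adj m).

Lemma adj_sym (x y : 'I_m) : adj x y -> adj y x.
Proof. by rewrite /cycle_adj orbC. Qed.

Lemma adj_mk (p : nat) : adj (mk p) (mk p.+1).
Proof. apply/orP; left => /=. by rewrite eq_sym -addn1 modnDml addn1. Qed.

Lemma adj_S (x : 'I_m) : adj x (mk x.+1).
Proof. by apply/orP; left. Qed.

Lemma mk_ord (x : 'I_m) : mk x = x.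
Proof. by apply: val_inj => /=; rewrite modn_small. Qed.

Lemma walk_up (x y : 'I_m) t : val y = x.+1 %% m -> 2 * k - 1 <= t ->
  exists g : nat -> 'I_m, [/\ g 0 = x, g t = y & forall j, j < t -> adj (g j) (g j.+1)].
Proof.
move=> Hy Ht.
have Hxy : adj x y by apply/orP; left; rewrite Hy.
case Ot: (odd t).
- exists (fun j => if odd j then y else x); split => //=; first by rewrite Ot.
  move=> j _ /=; case: (odd j) => /=; [exact: adj_sym|exact Hxy].
- have H2k : 2 * k <= t.
    case: (leqP (2*k) t) => // lt.
    have Et : t.+1 = 2 * k by lia.
    have : odd t.+1 = odd (2 * k) by rewrite Et.
    by rewrite /= Ot oddM.
  exists (fun j => if j <= 2 * k then mk (y + (2 * k - j))
                   else if odd (j - 2 * k) then x else y).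
  split.
  + rewrite leq0n subn0 /=; apply: val_inj => /=.
    rewrite Hy modnDml.
    have -> : x.+1 + 2 * k = x + (2 * k + 1) by lia.
    by rewrite modnDr modn_small.
  + case: (leqP t (2*k)) => h.
    * have -> : 2 * k - t = 0 by lia.
      by rewrite addn0 mk_ord.
    * by rewrite oddB ?Ot ?oddM // ltnW.
  + move=> j jt.
    case: (ltngtP j (2*k)) => h.
    * have h1 : j <= 2 * k by lia. have h2 : j.+1 <= 2 * k by lia. rewrite /= ?h1 ?h2.
      have -> : y + (2 * k - j) = (y + (2 * k - j.+1)).+1 by lia.
      apply: adj_sym; exact: adj_mk.
    * have h1 : (j <= 2 * k) = false by lia. have h2 : (j.+1 <= 2 * k) = false by lia.
      rewrite /= ?h1 ?h2.
      have -> : j.+1 - 2 * k = (j - 2 * k).+1 by lia.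
      rewrite /=; case: (odd (j - 2 * k)) => /=; [exact Hxy| exact: adj_sym].
    * have h2 : (j.+1 <= 2 * k) = false by lia.
      rewrite /= ?h ?h2 ?leqnn ?subSnn /= subnn addn0 mk_ord; exact: adj_sym.
Qed.

Lemma walk (x y : 'I_m) t : adj x y -> 2 * k - 1 <= t ->
  exists g : nat -> 'I_m, [/\ g 0 = x, g t = y & forall j, j < t -> adj (g j) (g j.+1)].
Proof.
case/orP => /eqP H Ht.
- exact: walk_up.
- have [g [g0 gt gs]] := walk_up H Ht.
  exists (fun j => g (t - j)); split.
  + by rewrite subn0.
  + by rewrite subnn.
  + move=> j jt. have -> : t - j = (t - j.+1).+1 by lia.
    apply: adj_sym; apply: gs; lia.
Qed.
End Walk.


Section Graph.
Variables (k : nat) (T : finType) (e : rel T) (pos : T -> nat).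
Hypotheses (esym : symmetric e) (eirr : irreflexive e) (posinj : injective pos)
  (noncross : forall a b c d, e a b -> e c d ->
     ~ [/\ pos a < pos c, pos c < pos b & pos b < pos d])
  (girth : girth_ge e (2 * k)).
Local Notation m := (2 * k + 1).
Local Notation adj := (@cycle_adj m).

Definition hom_on (S : {set T}) (f : T -> 'I_m) :=
  forall u v, u \in S -> v \in S -> e u v -> adj (f u) (f v).

Lemma ext_deg1 (S : {set T}) v : v \in S ->
  (forall x y, x \in S -> y \in S -> e v x -> e v y -> x = y) ->
  (exists f, hom_on (S :\ v) f) -> exists f, hom_on S f.
Proof.
move=> vS deg [f hf].
case: (pickP [pred u | (u \in S) && e v u]) => [u /andP [uS evu] | none].
- exists (fun z => if z == v then mk k (f u).+1 else f z).
  have uv : u != v by apply/eqP => E; rewrite E eirr in evu.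
  move=> x y xS yS exy.
  case: (eqVneq x v) => [Ex | nx]; case: (eqVneq y v) => [Ey | ny].
  + by rewrite Ex Ey eirr in exy.
  + rewrite Ex in exy. have yu : y = u by apply: deg.
    rewrite yu; apply: adj_sym; exact: adj_S.
  + rewrite Ey in exy. have xu : x = u by apply: deg => //; rewrite esym.
    rewrite xu; exact: adj_S.
  + by apply: hf => //; rewrite !inE ?nx ?ny.
- exists f => x y xS yS exy.
  case: (eqVneq x v) => [Ex | nx].
  + by move: (none y); rewrite /= yS -Ex exy.
  case: (eqVneq y v) => [Ey | ny].
  + by move: (none x); rewrite /= xS -Ey esym exy.
  by apply: hf => //; rewrite !inE ?nx ?ny.
Qed.

Lemma ext_ear (S : {set T}) (L : seq T) (x0 : T) :
  3 <= size L -> uniq L -> {subset L <= S} ->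
  e (nth x0 L 0) (nth x0 L (size L).-1) -> 2 * k <= size L ->
  (forall i y, 0 < i < (size L).-1 -> y \in S -> e (nth x0 L i) y ->
     y = nth x0 L i.-1 \/ y = nth x0 L i.+1) ->
  (forall S' : {set T}, #|S'| < #|S| -> exists f, hom_on S' f) -> exists f, hom_on S f.
Proof.
set t := (size L).-1.
move=> L3 Lu LS eab Lk nb IH.
set R := [set z | (z \in L) && (0 < index z L < t)].
have tsz : t < size L by rewrite /t; lia.
have t2 : 1 < t by rewrite /t; lia.
have tk : 2 * k - 1 <= t by rewrite /t; lia.
have L1R : nth x0 L 1 \in R.
  by rewrite inE mem_nth ?index_uniq //=; lia.
have [f hf] : exists f, hom_on (S :\: R) f.
  apply: IH.
  apply: (leq_ltn_trans _ (proper_card (properD1 (LS _ (mem_nth x0 (_ : 1 < size L)))))); last by lia.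
  apply: subset_leq_card; apply/subsetP => z; rewrite in_setD in_setD1 => /andP [zR ->].
  rewrite andbT; apply/eqP => E; by rewrite E L1R in zR.
have s0 : 0 < size L by lia.
have anR : nth x0 L 0 \notin R by rewrite inE index_uniq //= andbF.
have bnR : nth x0 L t \notin R by rewrite inE index_uniq // ltnn !andbF.
have aS' : nth x0 L 0 \in S :\: R by rewrite inE anR LS // mem_nth.
have bS' : nth x0 L t \in S :\: R by rewrite inE bnR LS // mem_nth.
have [g [g0 gt gs]] := walk (hf _ _ aS' bS' eab) tk.
pose F z := if z \in R then g (index z L) else f z.
exists F.
have fL : forall j, j <= t -> F (nth x0 L j) = g j.
  move=> j jt; rewrite /F.
  case: (posnP j) => [->|jp]; first by rewrite (negbTE anR) g0.
  case: (ltngtP j t) => h; last 1 first.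
  - by rewrite h (negbTE bnR) gt.
  - by rewrite inE mem_nth ?index_uniq //=; [rewrite jp h | lia | lia].
  - lia.
have side : forall u v, u \in S -> v \in S -> e u v -> u \in R -> adj (F u) (F v).
  move=> u v uS vS euv; rewrite inE => /andP [uL /andP [i0 it]].
  have uE : u = nth x0 L (index u L) by rewrite nth_index.
  rewrite uE in euv.
  rewrite uE fL; last by clia.
  case: (nb _ _ (_ : 0 < index u L < t) vS euv) => [|->|->]; first by rewrite i0 it.
  - rewrite fL; last by clia.
    apply: adj_sym. move: (gs (index u L).-1); rewrite prednK //; apply; clia.
  - rewrite fL //; exact: gs.
move=> u v uS vS euv.
case uR: (u \in R); first exact: side.
case vR: (v \in R); first by apply: adj_sym; apply: side => //; rewrite esym.
rewrite /F uR vR; apply: hf => //; by rewrite inE ?uR ?vR.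
Qed.
End Graph.


Ltac flia T L := try change (@size (Equality.sort T) L) with (@size (Finite.sort T) L) in *;
  repeat match goal with H : is_true (_ \in _) |- _ => clear H end; lia.

Section Ear.
Variables (k : nat) (T : finType) (e : rel T) (pos : T -> nat).
Hypotheses (esym : symmetric e) (eirr : irreflexive e) (posinj : injective pos)
  (noncross : forall a b c d, e a b -> e c d ->
     ~ [/\ pos a < pos c, pos c < pos b & pos b < pos d])
  (girth : girth_ge e (2 * k)).

Lemma ear (S : {set T}) :
  (forall v, v \in S -> exists x y, [/\ x \in S, y \in S, e v x, e v y & x != y]) ->
  forall v0, v0 \in S ->
  exists (L : seq T) (x0 : T),
  [/\ 3 <= size L, uniq L, {subset L <= S},
   e (nth x0 L 0) (nth x0 L (size L).-1) & 2 * k <= size L] /\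
   (forall i y, 0 < i < (size L).-1 -> y \in S -> e (nth x0 L i) y ->
     y = nth x0 L i.-1 \/ y = nth x0 L i.+1).
Proof.
move=> deg2 v0 v0S.
pose P := fun d => [exists a, [exists b, [exists c, [&& a \in S, b \in S, c \in S,
   e a b, pos a < pos c, pos c < pos b & pos b - pos a == d]]]].
have exP : exists d, P d.
{ apply: NNPP => nP.
  pose Q := fun n => [exists v, (v \in S) && (pos v == n)].
  have exQ : exists n, Q n by exists (pos v0); apply/existsP; exists v0; rewrite v0S eqxx.
  case: (ex_minnP exQ) => n /existsP [v /andP [vS /eqP pv]] minQ.
  have minv : forall z, z \in S -> pos v <= pos z.
    by move=> z zS; rewrite pv; apply: minQ; apply/existsP; exists z; rewrite zS eqxx.
  have [x [y [xS yS evx evy xy]]] := deg2 v vS.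
  have gtx : pos v < pos x.
    rewrite ltn_neqAle minv // andbT; apply/eqP => /posinj E; by rewrite E eirr in evx.
  have gty : pos v < pos y.
    rewrite ltn_neqAle minv // andbT; apply/eqP => /posinj E; by rewrite E eirr in evy.
  case: (ltngtP (pos x) (pos y)) => hxy.
  - apply: nP; exists (pos y - pos v); apply/existsP; exists v; apply/existsP; exists y;
      apply/existsP; exists x. by rewrite vS yS xS evy gtx hxy eqxx.
  - apply: nP; exists (pos x - pos v); apply/existsP; exists v; apply/existsP; exists x;
      apply/existsP; exists y. by rewrite vS yS xS evx gty hxy eqxx.
  - by move/posinj: hxy => E; rewrite E eqxx in xy. }
case: (ex_minnP exP) => d /existsP [a /existsP [b /existsP [c H]]] mind.
move: H => /andP [aS /andP [bS /andP [cS /andP [eab /andP [ac /andP [cb /eqP dE]]]]]].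
have minE : forall a' b' c', a' \in S -> b' \in S -> c' \in S -> e a' b' ->
    pos a' < pos c' -> pos c' < pos b' -> pos b - pos a <= pos b' - pos a'.
  move=> a' b' c' a'S b'S c'S e' h1 h2; rewrite dE; apply: mind.
  apply/existsP; exists a'; apply/existsP; exists b'; apply/existsP; exists c'.
  by rewrite a'S b'S c'S e' h1 h2 eqxx.
clear mind exP P.
pose leT := fun x y : T => pos x <= pos y.
pose L := sort leT (enum [set z in S | pos a <= pos z <= pos b]).
have memL : forall z, (z \in L) = (z \in S) && (pos a <= pos z <= pos b).
  by move=> z; rewrite mem_sort mem_enum inE.
have Lu : uniq L by rewrite sort_uniq enum_uniq.
have Lsort : sorted leT L by apply: sort_sorted => x y; exact: leq_total.
clearbody L.
have mono : forall i j, i < j -> j < size L -> pos (nth a L i) < pos (nth a L j).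
{ move=> i j ij js. rewrite ltn_neqAle; apply/andP; split.
  - apply/eqP => /posinj E.
    have : nth a L i == nth a L j by rewrite E.
    rewrite nth_uniq //; [move=> /eqP h; flia T L | exact: ltn_trans ij js].
  - have leT_tr : transitive leT by move=> y x z; rewrite /leT; exact: leq_trans.
    have leT_refl : reflexive leT by move=> x; rewrite /leT.
    apply: (sorted_leq_nth leT_tr leT_refl a Lsort); rewrite ?inE; flia T L. }
clear Lsort leT.
have ab : pos a < pos b := ltn_trans ac cb.
have aL : a \in L by rewrite memL aS leqnn (ltnW ab).
have bL : b \in L by rewrite memL bS leqnn (ltnW ab).
have cL : c \in L by rewrite memL cS (ltnW ac) (ltnW cb).
have sz3 : 3 <= size L.
  have -> : 3 = size [:: a; b; c] by [].
  apply: uniq_leq_size.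
  - have ne : forall x y, pos x < pos y -> x != y.
      by move=> x y h; apply/eqP => E; rewrite E ltnn in h.
    by rewrite /= !inE !negb_or (ne a b ab) (ne a c ac) eq_sym (ne c b cb).
  - by move=> z; rewrite !inE => /or3P [] /eqP ->.
set t := (size L).-1.
have tsz : t < size L by rewrite /t; flia T L.
have t2 : 1 < t by rewrite /t; flia T L.
have tE : t = (size L).-1 by [].
clearbody t.
have L0 : nth a L 0 = a.
{ have ia : index a L < size L by rewrite index_mem.
  case: (posnP (index a L)) => [i0|ip]; first by rewrite -i0 nth_index.
  have := mono 0 _ ip ia. rewrite nth_index //.
  have : pos a <= pos (nth a L 0).
    have : nth a L 0 \in L by apply: mem_nth; flia T L.
    by rewrite memL => /andP [_ /andP [->]].
  flia T L. }
have Lt : nth a L t = b.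
{ have ib : index b L < size L by rewrite index_mem.
  case: (ltngtP (index b L) t) => h.
  - have := mono _ _ h tsz. rewrite nth_index //.
    have : pos (nth a L t) <= pos b.
      have : nth a L t \in L by apply: mem_nth.
      by rewrite memL => /andP [_ /andP [_ ->]].
    flia T L.
  - flia T L.
  - by rewrite -h nth_index. }
have inS : forall i, i < size L -> nth a L i \in S.
  by move=> i hi; have := mem_nth a hi; rewrite memL => /andP [].
have nb : forall i y, 0 < i < t -> y \in S -> e (nth a L i) y ->
    y = nth a L i.-1 \/ y = nth a L i.+1.
{ move=> i y /andP [i0 it] yS ey.
  have paw : pos a < pos (nth a L i) by rewrite -{1}L0; apply: mono; flia T L.
  have pwb : pos (nth a L i) < pos b by rewrite -{1}Lt; apply: mono; flia T L.
  have wS : nth a L i \in S by apply: inS; flia T L.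
  have yL : y \in L.
    rewrite memL yS /=; apply/andP; split.
    - rewrite leqNgt; apply/negP => hy.
      by apply: (noncross (a:=y) (b:=nth a L i) (c:=a) (d:=b)) => //; rewrite esym.
    - rewrite leqNgt; apply/negP => hy.
      by apply: (noncross (a:=a) (b:=b) (c:=nth a L i) (d:=y)).
  have pay : pos a <= pos y by move: yL; rewrite memL => /andP [_ /andP [->]].
  have pyb : pos y <= pos b by move: yL; rewrite memL => /andP [_ /andP [_ ->]].
  have jsz : index y L < size L by rewrite index_mem.
  have yj : y = nth a L (index y L) by rewrite nth_index.
  case: (ltngtP (index y L) i) => hji.
  - left. case: (ltngtP (index y L) i.-1) => h.
    + exfalso.
      have h1 : pos y < pos (nth a L i.-1) by rewrite {1}yj; apply: mono; flia T L.
      have h2 : pos (nth a L i.-1) < pos (nth a L i) by apply: mono; flia T L.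
      have := minE y (nth a L i) (nth a L i.-1) yS wS (inS _ (_ : i.-1 < size L)) _ h1 h2.
      rewrite esym => /(_ _ ey); flia T L.
    + exfalso; flia T L.
    + by rewrite yj h.
  - right. case: (ltngtP (index y L) i.+1) => h.
    + exfalso; flia T L.
    + exfalso.
      have h1 : pos (nth a L i) < pos (nth a L i.+1) by apply: mono; flia T L.
      have h2 : pos (nth a L i.+1) < pos y by rewrite {1}yj; apply: mono; flia T L.
      have := minE (nth a L i) y (nth a L i.+1) wS yS (inS _ (_ : i.+1 < size L)) ey h1 h2.
      flia T L.
    + by rewrite yj h.
  - by move: ey; rewrite yj hji eirr. }
have inner2 : forall i, 0 < i < t ->
    e (nth a L i) (nth a L i.-1) /\ e (nth a L i) (nth a L i.+1).
{ move=> i hi.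
  have wS : nth a L i \in S by apply: inS; flia T L.
  have [x [y [xS yS ex ey xy]]] := deg2 _ wS.
  case: (nb i x hi xS ex) => [Hx|Hx]; case: (nb i y hi yS ey) => [Hy|Hy].
  - by rewrite Hx Hy eqxx in xy.
  - by rewrite -Hx -Hy.
  - by rewrite -Hx -Hy.
  - by rewrite Hx Hy eqxx in xy. }
have step : forall j, j < t -> e (nth a L j) (nth a L j.+1).
{ move=> j jt. case: (posnP j) => [->|jp].
  - have t1 : 0 < 1 < t by rewrite t2.
    have [h _] := inner2 1 t1. by rewrite esym.
  - have t1 : 0 < j < t by rewrite jp jt.
    by have [_ h] := inner2 j t1. }
have cyc : is_graph_cycle e L.
{ split => //. rewrite (cycle_path a) -nth_last -tE.
  apply/(pathP a) => i hi.
  case: i hi => [|i] hi /=.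
  - by rewrite L0 Lt esym.
  - apply: step; flia T L. }
exists L, a; split; last by rewrite -tE.
split => //.
- by move=> z; rewrite memL => /andP [].
- by rewrite -tE L0 Lt.
- exact: girth.
Qed.
End Ear.


Lemma main_ind (k : nat) (T : finType) (e : rel T) (pos : T -> nat)
  (esym : symmetric e) (eirr : irreflexive e) (posinj : injective pos)
  (noncross : forall a b c d, e a b -> e c d ->
     ~ [/\ pos a < pos c, pos c < pos b & pos b < pos d])
  (girth : girth_ge e (2 * k)) n :
  forall S : {set T}, #|S| <= n -> exists f, hom_on (k:=k) e S f.
Proof.
elim: n => [|n IH] S hS.
- exists (fun _ => mk k 0) => u v uS.
  have : #|S| == 0 by rewrite -leqn0.
  by rewrite cards_eq0 => /eqP S0; rewrite S0 inE in uS.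
- case: (set_0Vmem S) => [S0 | [v0 v0S]].
  + by exists (fun _ => mk k 0) => u v; rewrite S0 inE.
  have IH' : forall S' : {set T}, #|S'| < #|S| -> exists f, hom_on (k:=k) e S' f.
    by move=> S' h; apply: IH; rewrite -ltnS (leq_trans h hS).
  case: (classic (exists v, v \in S /\
           forall x y, x \in S -> y \in S -> e v x -> e v y -> x = y)).
  + case=> v [vS deg]. apply: (ext_deg1 esym eirr vS deg). apply: IH'.
    by rewrite (cardsD1 v S) vS.
  + move=> nd.
    have deg2 : forall v, v \in S ->
        exists x y, [/\ x \in S, y \in S, e v x, e v y & x != y].
      move=> v vS. apply: NNPP => H. apply: nd. exists v; split=> // x y xS yS ex ey.
      apply: NNPP => nxy. apply: H. exists x, y. split => //. by apply/eqP.
    have [L [x0 [[L3 Lu LS eab Lk] nb]]] := ear esym eirr posinj noncross girth deg2 v0S.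
    exact: (ext_ear esym L3 Lu LS eab Lk nb IH').
Qed.

Unset Implicit Arguments.

Theorem mainTheorem14 (k : nat) (T : finType) (e : rel T) :
  1 <= k -> simple_graph e -> outerplanar e -> girth_ge e (2 * k) ->
  exists f : T -> 'I_(2 * k + 1), graph_hom e (@cycle_adj (2 * k + 1)) f.
Proof.
move=> k1 [esym eirr] [pos [posinj nc]] gir.
have [f hf] := main_ind esym eirr posinj nc gir (leqnn #|[set: T]|).
by exists f => x y exy; apply: hf; rewrite ?inE.
Qed.
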